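(* Let $K$ be a field of characteristic zero, $0\ne c\in K$, $\phi$ the $K$-algebra endomorphism of $K[x]$ with $\phi(x)=x+c$, and $\delta=\mathrm{id}-\phi$. Let $a\in K$, $I$ the ideal generated by $x^2-ax$, $\beta=a/c$, and $D_n(t)=\frac{B_{n+1}(t)-B_{n+1}}{(n+1)t}\in\mathbb{Q}[t]$ for $n\ge0$. Let $f(x)=\sum_{i=0}^d a_ix^i\in K[x]$. Then $f\in\delta(I)$ if and only if $\sum_{i=0}^d a_iD_i(\beta)c^i=0$.
   Context: $\mathrm{id}$ is the identity map of $K[x]$. The Bernoulli polynomials are defined by $\frac{ue^{tu}}{e^u-1}=\sum_{n\ge0}B_n(t)\frac{u^n}{n!}$, and $B_n=B_n(0)$ are the Bernoulli numbers. *)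

(* Defs.v *)
From HB Require Import structures.
From mathcomp Require Import all_boot all_order all_algebra.
Set Implicit Arguments. Unset Strict Implicit. Unset Printing Implicit Defensive.
Import Order.TTheory GRing.Theory Num.Theory.
Local Open Scope ring_scope.

(* Bernoulli polynomials over Q, defined by comparing coefficients in the
   generating function identity  (e^u - 1) * sum_n B_n(t) u^n/n! = u e^{tu}:
   the coefficient of u^(n+1)/(n+1)! gives
     sum_{k=0}^{n} C(n+1,k) B_k(t) = (n+1) t^n,
   i.e.  B_n(t) = t^n - 1/(n+1) * sum_{k<n} C(n+1,k) B_k(t). *)
Fixpoint bern_seq (n : nat) : seq {poly rat} :=
  match n with
  | 0 => [:: 1]
  | m.+1 =>
      let s := bern_seq m in
      rcons s ('X^n - (n.+1%:R)^-1 *: \sum_(k < n) ('C(n.+1, k))%:R *: s`_k)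
  end.

Definition bernoulli_poly (n : nat) : {poly rat} := (bern_seq n)`_n.

Definition bernoulli_num (n : nat) : rat := (bernoulli_poly n).[0].

(* D_n(t) = (B_{n+1}(t) - B_{n+1}) / ((n+1) t)  in Q[t]
   (the numerator has zero constant term, so division by t is exact). *)
Definition bernD (n : nat) : {poly rat} :=
  (n.+1%:R)^-1 *: ((bernoulli_poly n.+1 - (bernoulli_num n.+1)%:P) %/ 'X).

Definition phi (K : fieldType) (c : K) (p : {poly K}) : {poly K} :=
  p \Po ('X + c%:P).

Definition delta (K : fieldType) (c : K) (p : {poly K}) : {poly K} :=
  p - phi c p.

Definition in_ideal (K : fieldType) (a : K) (g : {poly K}) : Prop :=
  exists q : {poly K}, g = q * ('X^2 - a *: 'X).

Definition in_delta_image (K : fieldType) (c a : K) (f : {poly K}) : Prop :=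
  exists g : {poly K}, in_ideal a g /\ f = delta c g.

(* Main.v *)
Require Import Defs.
From HB Require Import structures.
From mathcomp Require Import all_boot all_order all_algebra.
From mathcomp Require Import ring.
Import Order.TTheory GRing.Theory Num.Theory.
Local Open Scope ring_scope.

Lemma size_bern_seq n : size (bern_seq n) = n.+1.
Proof. by elim: n => //= n IH; rewrite size_rcons IH. Qed.

Lemma bern_seq_nth n k : (k <= n)%N -> (bern_seq n)`_k = bernoulli_poly k.
Proof.
elim: n => [|n IH]; first by rewrite leqn0 => /eqP->.
rewrite leq_eqVlt => /orP[/eqP->//|]; rewrite ltnS => hk.
by rewrite /= nth_rcons size_bern_seq ltnS hk IH.
Qed.

Lemma bern_rec m : bernoulli_poly m.+1 = 'X^(m.+1) -
  (m.+2%:R)^-1 *: \sum_(k < m.+1) ('C(m.+2, k))%:R *: bernoulli_poly k.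
Proof.
rewrite {1}/bernoulli_poly /= nth_rcons size_bern_seq ltnn eqxx.
congr (_ - _ *: _); apply: eq_bigr => k _; by rewrite bern_seq_nth // -ltnS.
Qed.

Lemma comp_sum (R : comNzRingType) (q : {poly R}) n (F : 'I_n -> {poly R}) :
  (\sum_(i < n) F i) \Po q = \sum_(i < n) (F i \Po q).
Proof. by rewrite linear_sum. Qed.

Lemma bern_delta n :
  bernoulli_poly n \Po ('X + 1) - bernoulli_poly n = n%:R *: 'X^(n.-1).
Proof.
elim/ltn_ind: n => -[|m] IH.
  by rewrite /bernoulli_poly /= -polyC1 comp_polyC subrr scale0r.
rewrite bern_rec comp_polyB comp_polyZ comp_Xn_poly.
have -> : (\sum_(k < m.+1) ('C(m.+2, k))%:R *: bernoulli_poly k) \Po ('X + 1)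
   = \sum_(k < m.+1) ('C(m.+2, k))%:R *: (bernoulli_poly k \Po ('X + 1)).
  by rewrite comp_sum; apply: eq_bigr => k _; rewrite comp_polyZ.
set S1 := \sum_(k < m.+1) _.
set S0 := \sum_(k < m.+1) _.
have -> : S1 = S0 + \sum_(k < m.+1) ('C(m.+2, k))%:R *: ((k : nat)%:R *: 'X^(k.-1)).
  rewrite /S1 /S0 -big_split /=; apply: eq_bigr => k _.
  by rewrite -scalerDr -IH // addrCA subrr addr0.
rewrite (big_ord_recl m) /= scale0r scaler0 add0r.
have -> : \sum_(i < m) ('C(m.+2, (lift ord0 i)))%:R *: (((lift ord0 i) : nat)%:R *: ('X^(((lift ord0 i) : nat).-1) : {poly rat}))
   = m.+2%:R *: \sum_(i < m) ('C(m.+1, i))%:R *: ('X^i : {poly rat}).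
  rewrite scaler_sumr; apply: eq_bigr => i _ /=.
  rewrite scalerA scalerA -natrM -natrM mulnC -mul_bin_diag //.
rewrite exprD1n big_ord_recr big_ord_recr /= binn mulr1n binSn.
rewrite scalerDr scalerA mulVf ?pnatr_eq0 // scale1r.
have -> : \sum_(i < m) 'X^i *+ 'C(m.+1, i) = \sum_(i < m) ('C(m.+1, i))%:R *: ('X^i : {poly rat}).
  by apply: eq_bigr => i _; rewrite scaler_nat.
rewrite scaler_nat.
set T := \sum_(i < m) _.
set U := _ *: S0.
set V := 'X^m *+ _.
set W := 'X^(m.+1).
ring.
Qed.

Lemma bernD_X n : bernD n * 'X =
  (n.+1%:R)^-1 *: (bernoulli_poly n.+1 - (bernoulli_num n.+1)%:P).
Proof.
rewrite /bernD -scalerAl divpK //.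
have := dvdp_XsubCl (bernoulli_poly n.+1 - (bernoulli_num n.+1)%:P) 0.
rewrite subr0 => ->.
by rewrite /root hornerD hornerN hornerC /bernoulli_num subrr.
Qed.

Lemma bernD_delta n : (bernD n * 'X) \Po ('X + 1) - bernD n * 'X = 'X^n.
Proof.
rewrite bernD_X comp_polyZ -scalerBr comp_polyB comp_polyC opprB addrA subrK.
by rewrite bern_delta scalerA mulVf ?pnatr_eq0 // scale1r.
Qed.
Section RatrK.
Variable K : fieldType.
Hypothesis charK : [pchar K] =i pred0.

Lemma nz_denK x : (denq x)%:~R != 0 :> K.
Proof.
move: (denq_gt0 x); case: (denq x) => [n|n] //= hn.
change ((n%:R : K) != 0); rewrite (pcharf0P K).1 //; by rewrite -lt0n.
Qed.

Fact ratrK_zmod : zmod_morphism (@ratr K).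
Proof.
have injZtoQ: @injective rat int intr by apply: intr_inj.
have nz_den := nz_denK.
move=> x y.
apply: (canLR (mulfK (nz_den _))); apply: (mulIf (nz_den x)).
rewrite mulrAC mulrBl divfK ?nz_den // mulrAC -!rmorphM.
apply: (mulIf (nz_den y)); rewrite mulrAC mulrBl divfK ?nz_den //.
rewrite -!(rmorphM, rmorphB); congr _%:~R; apply: injZtoQ.
rewrite !(rmorphM, rmorphB) /= [_ - _]lock /= -lock !numqE.
by rewrite (mulrAC y) -!mulrBl -mulrA mulrAC !mulrA.
Qed.

Fact ratrK_monoid : monoid_morphism (@ratr K).
Proof.
have injZtoQ: @injective rat int intr by apply: intr_inj.
have nz_den := nz_denK.
split=> [|x y]; first by rewrite /ratr divr1.
rewrite /ratr mulrC mulrAC; apply: canLR (mulKf (nz_den _)) _; rewrite !mulrA.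
do 2!apply: canRL (mulfK (nz_den _)) _; rewrite -!rmorphM; congr _%:~R.
apply: injZtoQ; rewrite !rmorphM [x * y]lock /= !numqE -lock.
by rewrite -!mulrA mulrA mulrCA -!mulrA (mulrCA y).
Qed.

Definition ratrM : {rmorphism rat -> K} :=
  HB.pack (@ratr K) (GRing.isZmodMorphism.Build _ _ _ ratrK_zmod)
    (GRing.isMonoidMorphism.Build _ _ _ ratrK_monoid).

Lemma ratrME : map_poly (@ratr K) =1 map_poly ratrM.
Proof. by []. Qed.

End RatrK.

Section Main.
Variable K : fieldType.
Hypothesis charK : [pchar K] =i pred0.

Lemma natrK_inj : injective (fun n : nat => n%:R : K).
Proof.
have H m n : (m <= n)%N -> m%:R = n%:R :> K -> m = n.
  move=> h e; have: (n - m)%:R == 0 :> K by rewrite natrB // e subrr.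
  rewrite (pcharf0P K).1 // subn_eq0 => h2; apply/eqP; by rewrite eqn_leq h h2.
move=> m n /= e; case: (leqP m n) => h; first exact: H.
by apply/esym/H => //; apply: ltnW.
Qed.

Lemma periodic_const (p : {poly K}) : p \Po ('X + 1) = p -> p = (p.[0])%:P.
Proof.
move=> hp.
have hn n : p.[n%:R] = p.[0].
  elim: n => // n IH; rewrite -IH -{2}hp horner_comp.
  by rewrite !hornerE mulrSr.
apply/eqP; rewrite -subr_eq0; apply/negPn/negP => hq.
pose rs := [seq (i%:R : K) | i <- iota 0 (size (p - p.[0]%:P))].
have H1 : all (root (p - p.[0]%:P)) rs.
  by apply/allP => x /mapP[i _ ->]; rewrite /root hornerD hornerN hornerC hn subrr.
have H2 : uniq rs by rewrite map_inj_uniq ?iota_uniq //; exact natrK_inj.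
by have := max_poly_roots hq H1 H2; rewrite size_map size_iota ltnn.
Qed.

Variables (c a : K).
Hypothesis hc : c != 0.

Local Notation mR := (map_poly (@ratr K)).
Let f0 := ratrM K charK.
Lemma mRM p q : mR (p * q) = mR p * mR q.
Proof. exact: (map_poly_is_multiplicative f0).1. Qed.
Lemma mR1 : mR 1 = 1.
Proof. exact: (map_poly_is_multiplicative f0).2. Qed.
Lemma mRB p q : mR (p - q) = mR p - mR q.
Proof. exact: (rmorphB (map_poly f0)). Qed.
Lemma mRD p q : mR (p + q) = mR p + mR q.
Proof. exact: (rmorphD (map_poly f0)). Qed.
Lemma mRX : mR 'X = 'X.
Proof. exact: (map_polyX f0). Qed.
Lemma mRXn n : mR 'X^n = 'X^n.
Proof. exact: (map_polyXn f0). Qed.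
Lemma mR_comp p q : mR (p \Po q) = mR p \Po mR q.
Proof. exact: (map_comp_poly f0). Qed.

Definition GG (f : {poly K}) :=
  \sum_(i < size f) (f`_i * c ^+ i) *: mR (bernD i * 'X).
Definition HH (f : {poly K}) :=
  \sum_(i < size f) (f`_i * c ^+ i) *: mR (bernD i).

Lemma GG_HH f : GG f = HH f * 'X.
Proof.
rewrite /GG /HH mulr_suml; apply: eq_bigr => i _.
by rewrite mRM mRX -scalerAl.
Qed.

Lemma GG_delta f : GG f \Po ('X + 1) - GG f = f \Po (c *: 'X).
Proof.
rewrite /GG comp_sum -sumrB comp_polyE; apply: eq_bigr => i _.
rewrite comp_polyZ -scalerBr exprZn scalerA.
have -> : 'X + 1 = mR ('X + 1) by rewrite mRD mRX mR1.
by rewrite -mR_comp -mRB bernD_delta mRXn.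
Qed.

Lemma HH_eval (f : {poly K}) : \sum_(i < size f) f`_i * (map_poly ratr (bernD i)).[a / c] * c ^+ i
   = (HH f).[a / c].
Proof.
rewrite /HH horner_sum; apply: eq_bigr => i _.
by rewrite hornerZ mulrAC.
Qed.

Lemma dir1 f : in_delta_image c a f -> (HH f).[a / c] = 0.
Proof.
case=> g [[q hq] hf].
set h := g \Po (c *: 'X).
have e1 : ('X + c%:P) \Po (c *: 'X) = c *: 'X + c%:P.
  by rewrite comp_polyD comp_polyX comp_polyC.
have e2 : (c *: 'X) \Po ('X + 1) = c *: 'X + c%:P.
  by rewrite comp_polyZ comp_polyX scalerDr -alg_polyC.
have hf' : f \Po (c *: 'X) = h - (h \Po ('X + 1)).
  by rewrite hf /delta /phi comp_polyB  -comp_polyA e1 /h -comp_polyA e2.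
have hP : (GG f + h) \Po ('X + 1) = GG f + h.
  rewrite comp_polyD; have := GG_delta f; rewrite hf' => /eqP; rewrite subr_eq => /eqP ->.
  ring.
have h0 : (GG f + h).[0] = 0.
  rewrite hornerD GG_HH hornerMX mulr0 add0r /h horner_comp hornerZ hornerX mulr0 hq.
  by rewrite hornerM hornerD hornerN hornerZ hornerX hornerXn expr2 !mulr0 subrr mulr0.
have hG : GG f = - h.
  have := periodic_const _ hP; rewrite h0 polyC0 => /eqP; rewrite addr_eq0 => /eqP //.
have e3 : (c *: 'X)^+2 - a *: (c *: 'X) = (c%:P * (c%:P * 'X - a%:P)) * 'X :> {poly K}.
  rewrite -!mul_polyC; ring.
move: hG; rewrite GG_HH /h hq comp_polyM comp_polyB comp_polyZ comp_Xn_poly comp_polyX e3.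
rewrite mulrA -mulNr => /mulIf; rewrite polyX_eq0 => /(_ isT) ->.
rewrite hornerN !hornerM hornerD hornerN !hornerC. rewrite hornerCM hornerX [c * (a / c)]mulrC divfK //.
by rewrite subrr !mulr0 oppr0.
Qed.

Lemma comp_polyN' (p q : {poly K}) : (- p) \Po q = - (p \Po q).
Proof. by rewrite -sub0r comp_polyB comp_poly0 sub0r. Qed.

Lemma dir2 f : (HH f).[a / c] = 0 -> in_delta_image c a f.
Proof.
move=> h0; have /factor_theorem [r hr] : root (HH f) (a / c) by rewrite /root h0.
exists (- (GG f \Po (c^-1 *: 'X))); split.
  exists (-((r \Po (c^-1 *: 'X)) * (c^-1)%:P * (c^-1)%:P)).
  rewrite GG_HH hr !comp_polyM comp_polyB comp_polyX comp_polyC -!mul_polyC polyCM.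
  ring.
have e4 : (c^-1 *: 'X) \Po ('X + c%:P) = ('X + 1) \Po (c^-1 *: 'X).
  rewrite comp_polyZ comp_polyX comp_polyD comp_polyX -polyC1 comp_polyC.
  by rewrite scalerDr scale_polyC mulVf.
rewrite /delta /phi comp_polyN' opprK addrC -comp_polyA e4 comp_polyA -comp_polyB.
by rewrite GG_delta -comp_polyA comp_polyZ comp_polyX scalerA mulfV // scale1r comp_polyXr.
Qed.

Lemma main_iff f : in_delta_image c a f <->
  \sum_(i < size f) f`_i * (map_poly ratr (bernD i)).[a / c] * c ^+ i = 0.
Proof. rewrite HH_eval; split; [exact: dir1 | exact: dir2]. Qed.

End Main.

Theorem corollary4p6 (K : fieldType) (charK : [pchar K] =i pred0)
    (c : K) (hc : c != 0) (a : K) (f : {poly K}) :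
  in_delta_image c a f <->
  \sum_(i < size f) f`_i * (map_poly ratr (bernD i)).[a / c] * c ^+ i = 0.
Proof. exact: main_iff. Qed.
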